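(* Let $T$ be a tree in which every nontrivial pseudo-supremum is a supremum. Then $T$ is monotonically normal in each of the coarse wedge topology, the fine wedge topology, and the chevron topology.
   Context: A tree is a partially ordered set in which the set of predecessors of each element is well-ordered. Levels: $T(0)$ is the set of minimal elements; $T(\alpha)$ is the set of minimal elements of $T\setminus\bigcup_{\beta<\alpha}T(\beta)$; successor levels are $T(\alpha+1)$. For a nonempty chain $C$ bounded above, its pseudo-supremum is the set of minimal upper bounds of $C$; the standing assumption is that each such set is a singleton. For $t\in T$, $V_t=\{s:s\ge t\}$. Fine wedge topology: subbase all $V_t$ and $T\setminus V_t$. Coarse wedge topology: subbase all $V_t$ and $T\setminus V_t$ with $t$ minimal or on a successor level. Chevron topology: base consisting of all $\{m\}$ with $m$ minimal, together with all sets $C[s,t]=(V_s\setminus V_t)\cup\{t\}$ where $s\le t$ and $s$ is minimal or on a successor level. *)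

(* Defs.v *)
From Stdlib Require Import List.
Import ListNotations.

Section Trees.
Context {T : Type} (le : T -> T -> Prop).

Definition lt (s t : T) : Prop := le s t /\ s <> t.

Definition well_ordered_set (A : T -> Prop) : Prop :=
  (forall x y, A x -> A y -> le x y \/ le y x) /\
  (forall B : T -> Prop, (forall x, B x -> A x) -> (exists x, B x) ->
     exists m, B m /\ forall x, B x -> le m x).

Record is_tree : Prop := {
  tree_refl : forall x, le x x;
  tree_antisym : forall x y, le x y -> le y x -> x = y;
  tree_trans : forall x y z, le x y -> le y z -> le x z;
  tree_pred_wo : forall t, well_ordered_set (fun s => lt s t)
}.

Definition minimal (t : T) : Prop := forall s, le s t -> s = t.

(* t lies on a successor level T(a+1) iff the (well-ordered) set of its
   predecessors has a greatest element, i.e. its order type is a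
   successor ordinal. *)
Definition on_successor_level (t : T) : Prop :=
  exists p, lt p t /\ forall s, lt s t -> le s p.

Definition minimal_or_successor (t : T) : Prop :=
  minimal t \/ on_successor_level t.

Definition chain (C : T -> Prop) : Prop :=
  forall x y, C x -> C y -> le x y \/ le y x.

Definition upper_bound (C : T -> Prop) (u : T) : Prop :=
  forall c, C c -> le c u.

Definition bounded_above (C : T -> Prop) : Prop := exists u, upper_bound C u.

Definition pseudo_sup (C : T -> Prop) : T -> Prop :=
  fun u => upper_bound C u /\ forall v, upper_bound C v -> le v u -> v = u.

Definition is_sup (C : T -> Prop) (u : T) : Prop :=
  upper_bound C u /\ forall v, upper_bound C v -> le u v.

Definition has_max (C : T -> Prop) : Prop :=
  exists m, C m /\ forall c, C c -> le c m.

Definition pseudo_sups_singleton : Prop :=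
  forall C, chain C -> (exists c, C c) -> bounded_above C ->
    exists u, forall v, pseudo_sup C v <-> v = u.

Definition nontrivial_pseudo_sups_are_sups : Prop :=
  forall C, chain C -> (exists c, C c) -> bounded_above C -> ~ has_max C ->
    forall u, pseudo_sup C u -> is_sup C u.

Definition V (t : T) : T -> Prop := fun s => le t s.

Definition compl (A : T -> Prop) : T -> Prop := fun s => ~ A s.

Definition fine_wedge_subbase (S : T -> Prop) : Prop :=
  exists t, S = V t \/ S = compl (V t).

Definition coarse_wedge_subbase (S : T -> Prop) : Prop :=
  exists t, minimal_or_successor t /\ (S = V t \/ S = compl (V t)).

Definition chevron_set (s t : T) : T -> Prop :=
  fun x => (V s x /\ ~ V t x) \/ x = t.

Definition chevron_base (B : T -> Prop) : Prop :=
  (exists m, minimal m /\ B = (fun x => x = m)) \/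
  (exists s t, le s t /\ minimal_or_successor s /\ B = chevron_set s t).

End Trees.

Definition open_from_subbase {T : Type} (S : (T -> Prop) -> Prop)
  (U : T -> Prop) : Prop :=
  (* U is a union of finite intersections of members of S *)
  forall x, U x -> exists l : list (T -> Prop),
    Forall S l /\ (forall A, In A l -> A x) /\
    (forall y, (forall A, In A l -> A y) -> U y).

Definition open_from_base {T : Type} (B : (T -> Prop) -> Prop)
  (U : T -> Prop) : Prop :=
  forall x, U x -> exists A, B A /\ A x /\ (forall y, A y -> U y).

Definition fine_wedge_open {T} (le : T -> T -> Prop) :=
  open_from_subbase (fine_wedge_subbase le).
Definition coarse_wedge_open {T} (le : T -> T -> Prop) :=
  open_from_subbase (coarse_wedge_subbase le).
Definition chevron_open {T} (le : T -> T -> Prop) :=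
  open_from_base (chevron_base le).

(* Monotone normality (pointwise Borges / Heath-Lutzer-Zenor form), for
   a topology given by its family of open sets; T1 is included. *)
Definition T1_space {T : Type} (open : (T -> Prop) -> Prop) : Prop :=
  forall x y : T, x <> y -> exists U, open U /\ U x /\ ~ U y.

Definition monotonically_normal {T : Type} (open : (T -> Prop) -> Prop) : Prop :=
  T1_space open /\
  exists H : T -> (T -> Prop) -> (T -> Prop),
    (forall x U, open U -> U x ->
       open (H x U) /\ H x U x /\ (forall z, H x U z -> U z)) /\
    (forall x y U V, open U -> open V -> U x -> V y ->
       (exists z, H x U z /\ H y V z) -> V x \/ U y).

(* Main.v *)
Require Import Defs.
From Stdlib Require Import List Classical ClassicalEpsilon.
Import ListNotations.

Definition isucc {T : Type} (le : T -> T -> Prop) (x u : T) : Prop :=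
  lt le x u /\ forall w, lt le x w -> le w u -> w = u.

Definition Wset {T : Type} (le : T -> T -> Prop) (s : T) (F : list T) : T -> Prop :=
  fun w => le s w /\ forall u, In u F -> ~ le u w.

Lemma comparable {T} (le : T -> T -> Prop) : is_tree le ->
  forall a b c, le a c -> le b c -> le a b \/ le b a.
Proof.
  intros Ht a b c Hac Hbc.
  destruct (classic (a = c)) as [->|Ha]; [right; exact Hbc|].
  destruct (classic (b = c)) as [->|Hb]; [left; exact Hac|].
  destruct (tree_pred_wo le Ht c) as [Hlin _].
  apply Hlin; split; assumption.
Qed.

Lemma lt_le_trans {T} (le : T -> T -> Prop) : is_tree le ->
  forall a b c, lt le a b -> le b c -> lt le a c.
Proof.
  intros Ht a b c [Hab Hn] Hbc. split.
  - eapply tree_trans; eauto.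
  - intros ->. apply Hn. apply (tree_antisym le Ht); auto.
Qed.

Lemma le_lt_trans {T} (le : T -> T -> Prop) : is_tree le ->
  forall a b c, le a b -> lt le b c -> lt le a c.
Proof.
  intros Ht a b c Hab [Hbc Hn]. split.
  - eapply tree_trans; eauto.
  - intros ->. apply Hn. apply (tree_antisym le Ht); auto.
Qed.

Lemma root_below {T} (le : T -> T -> Prop) : is_tree le ->
  forall x, exists r, minimal le r /\ le r x.
Proof.
  intros Ht x.
  destruct (classic (exists q, lt le q x)) as [Hex|Hno].
  - destruct (tree_pred_wo le Ht x) as [_ Hwo].
    destruct (Hwo (fun q => lt le q x) (fun q h => h) Hex) as [m [Hm Hmin]].
    exists m. split; [|apply Hm].
    intros s Hs. destruct (classic (s = m)) as [|Hsm]; [assumption|].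
    exfalso. assert (Hsx : lt le s x) by (eapply le_lt_trans; eauto).
    apply Hsm. apply (tree_antisym le Ht); auto.
  - exists x. split; [|apply (tree_refl le Ht)].
    intros s Hs. apply NNPP. intro Hn. apply Hno. exists s. split; auto.
Qed.

Lemma isucc_exists {T} (le : T -> T -> Prop) : is_tree le ->
  forall x t, lt le x t -> exists u, isucc le x u /\ le u t.
Proof.
  intros Ht x t Hxt.
  destruct (classic (exists q, lt le q t /\ lt le x q)) as [Hex|Hno].
  - destruct (tree_pred_wo le Ht t) as [_ Hwo].
    destruct (Hwo (fun q => lt le q t /\ lt le x q) (fun q h => proj1 h) Hex)
      as [m [[Hmt Hxm] Hmin]].
    exists m. split; [|apply Hmt].
    split; [exact Hxm|].
    intros w Hxw Hwm. destruct (classic (w = m)) as [|Hwm']; [assumption|].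
    assert (Hwt : lt le w t) by (eapply le_lt_trans; eauto).
    apply (tree_antisym le Ht); auto.
  - exists t. split; [|apply (tree_refl le Ht)].
    split; [exact Hxt|].
    intros w Hxw Hwt. apply NNPP. intro Hn. apply Hno. exists w.
    split; [split; auto|auto].
Qed.

Lemma isucc_succ {T} (le : T -> T -> Prop) : is_tree le ->
  forall x u, isucc le x u -> on_successor_level le u.
Proof.
  intros Ht x u [Hxu Himm]. exists x. split; [exact Hxu|].
  intros s Hsu.
  destruct (comparable le Ht s x u (proj1 Hsu) (proj1 Hxu)) as [H|H]; [exact H|].
  destruct (classic (x = s)) as [<-|Hne]; [apply (tree_refl le Ht)|].
  exfalso. destruct Hsu as [Hsu Hsn]. apply Hsn. apply Himm; auto. split; auto.
Qed.

Lemma mos_of {T} (le : T -> T -> Prop) : is_tree le ->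
  nontrivial_pseudo_sups_are_sups le ->
  forall m y, (forall p, lt le p m -> le p y) -> ~ le m y ->
  minimal_or_successor le m.
Proof.
  intros Ht Hs m y Hp Hmy.
  destruct (classic (minimal le m)) as [Hm|Hm]; [left; exact Hm|].
  destruct (classic (on_successor_level le m)) as [Hsl|Hsl]; [right; exact Hsl|].
  exfalso.
  assert (Hne : exists s, lt le s m).
  { apply NNPP. intro Hn. apply Hm. intros s Hs'. apply NNPP. intro Hsm.
    apply Hn. exists s. split; auto. }
  assert (Hch : chain le (fun p => lt le p m)).
  { intros a b Ha Hb. destruct (tree_pred_wo le Ht m) as [Hl _]. apply Hl; auto. }
  assert (Hub : upper_bound le (fun p => lt le p m) m) by (intros c Hc; apply Hc).
  assert (Hnm : ~ has_max le (fun p => lt le p m)).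
  { intros [mx [Hmx Hall]]. apply Hsl. exists mx. split; auto. }
  assert (Hps : pseudo_sup le (fun p => lt le p m) m).
  { split; [exact Hub|]. intros v Hv Hvm. apply NNPP. intro Hvn.
    apply Hnm. exists v. split; [split; auto|]. intros c Hc. apply Hv. exact Hc. }
  destruct (Hs _ Hch Hne (ex_intro _ m Hub) Hnm m Hps) as [_ Hleast].
  apply Hmy. apply Hleast. intros c Hc. apply Hp. exact Hc.
Qed.

Lemma lemmaB {T} (le : T -> T -> Prop) : is_tree le ->
  nontrivial_pseudo_sups_are_sups le ->
  forall x y, ~ le x y -> exists s, minimal_or_successor le s /\ le s x /\ ~ le s y.
Proof.
  intros Ht Hs x y Hxy.
  destruct (classic (exists q, lt le q x /\ ~ le q y)) as [Hex|Hno].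
  - destruct (tree_pred_wo le Ht x) as [_ Hwo].
    destruct (Hwo (fun q => lt le q x /\ ~ le q y) (fun q h => proj1 h) Hex)
      as [m [[Hmx Hmy] Hmin]].
    exists m. split; [|split; [apply Hmx|exact Hmy]].
    apply (mos_of le Ht Hs m y); auto.
    intros p Hpm. apply NNPP. intro Hpy.
    assert (Hpx : lt le p x) by (eapply lt_le_trans; eauto; apply Hmx).
    assert (le m p) by (apply Hmin; split; auto).
    destruct Hpm as [Hpm Hpn]. apply Hpn. apply (tree_antisym le Ht); auto.
  - exists x. split; [|split; [apply (tree_refl le Ht)|exact Hxy]].
    apply (mos_of le Ht Hs x y); auto.
    intros p Hp. apply NNPP. intro Hn. apply Hno. exists p. split; auto.
Qed.

Lemma mn_half {T} (le : T -> T -> Prop) : is_tree le ->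
  forall (x y z s1 s2 : T) F1 F2 (U V : T -> Prop),
  le s1 x -> Forall (isucc le x) F1 -> (forall w, Wset le s1 F1 w -> U w) ->
  le s2 y -> Forall (isucc le y) F2 -> (forall w, Wset le s2 F2 w -> V w) ->
  Wset le s1 F1 z -> Wset le s2 F2 z -> le s1 s2 -> V x \/ U y.
Proof.
  intros Ht x y z s1 s2 F1 F2 U V Hs1 HF1 HW1 Hs2 HF2 HW2 [Hz1 Hz1'] [Hz2 Hz2'] H12.
  rewrite Forall_forall in HF1, HF2.
  destruct (classic (U y)) as [Hy|Hy]; [right; exact Hy|left].
  assert (Hex : exists u, In u F1 /\ le u y).
  { apply NNPP. intro Hn. apply Hy, HW1. split.
    - eapply tree_trans; eauto.
    - intros u Hu Hle. apply Hn; eauto. }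
  destruct Hex as [u [Hu Huy]].
  destruct (HF1 u Hu) as [Hxu Himm].
  assert (Hxy : le x y) by (eapply tree_trans; eauto; apply Hxu).
  destruct (classic (le s2 x)) as [H2x|H2x].
  - apply HW2. split; [exact H2x|].
    intros u' Hu' Hle. destruct (HF2 u' Hu') as [[Hyu' Hyn] _].
    assert (Hyx : le y x) by (eapply tree_trans; eauto).
    assert (x = y) by (apply (tree_antisym le Ht); auto). subst y.
    apply Hyn. apply (tree_antisym le Ht); auto.
  - destruct (comparable le Ht s2 x y Hs2 Hxy) as [H|Hx2]; [contradiction|].
    assert (Hne : x <> s2) by (intros ->; apply H2x; apply (tree_refl le Ht)).
    destruct (comparable le Ht u s2 y Huy Hs2) as [Hu2|H2u].
    + exfalso. apply (Hz1' u Hu). eapply tree_trans; eauto.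
    + assert (s2 = u) by (apply Himm; [split; auto|auto]). subst s2.
      exfalso. apply (Hz1' u Hu). exact Hz2.
Qed.

Lemma generic_mn {T} (le : T -> T -> Prop) (good : T -> Prop)
  (open : (T -> Prop) -> Prop) :
  is_tree le ->
  (forall x y, ~ le x y -> exists s, good s /\ le s x /\ ~ le s y) ->
  (forall x, exists s, good s /\ le s x) ->
  (forall x s F, good s -> le s x -> Forall (isucc le x) F -> open (Wset le s F)) ->
  (forall x U, open U -> U x -> exists s F, good s /\ le s x /\
      Forall (isucc le x) F /\ forall w, Wset le s F w -> U w) ->
  monotonically_normal open.
Proof.
  intros Ht Hbelow Hex Hopen Hred. split.
  - intros x y Hxy. destruct (classic (le x y)) as [Hle|Hle].
    + assert (Hlt : lt le x y) by (split; auto).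
      destruct (isucc_exists le Ht x y Hlt) as [u [Hu Huy]].
      destruct (Hex x) as [s [Hg Hsx]].
      exists (Wset le s [u]). split; [apply (Hopen x); auto|].
      split.
      * split; [exact Hsx|]. intros u' Hin Hux. destruct Hin as [Heq|[]]. subst u'.
        destruct Hu as [[Hxu Hn] _]. apply Hn. apply (tree_antisym le Ht); auto.
      * intros [_ Hw]. apply (Hw u); simpl; auto.
    + destruct (Hbelow x y Hle) as [s [Hg [Hsx Hsy]]].
      exists (Wset le s []). split; [apply (Hopen x); auto|].
      split; [split; [exact Hsx|intros u []]|]. intros [H _]. contradiction.
  - assert (Hexist : forall x U, exists Wt : T -> Prop, (open U /\ U x) ->
      exists s F, good s /\ le s x /\ Forall (isucc le x) F /\
        (forall w, Wset le s F w -> U w) /\ Wt = Wset le s F).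
    { intros x U. destruct (classic (open U /\ U x)) as [[H1 H2]|Hn].
      - destruct (Hred x U H1 H2) as [s [F [A [B [C D]]]]].
        exists (Wset le s F). intros _. exists s, F. tauto.
      - exists (fun _ => False). intros H; contradiction. }
    exists (fun x U => proj1_sig (constructive_indefinite_description _ (Hexist x U))).
    split.
    + intros x U HU HUx.
      destruct (constructive_indefinite_description _ (Hexist x U)) as [Wt HW]; simpl.
      destruct (HW (conj HU HUx)) as [s [F [Hg [Hsx [HF [Hsub ->]]]]]].
      split; [apply (Hopen x); auto|]. split; [|exact Hsub].
      split; [exact Hsx|]. intros u Hu Hux. rewrite Forall_forall in HF.
      destruct (HF u Hu) as [[_ Hn] _]. apply Hn.
      apply (tree_antisym le Ht); auto. apply (HF u Hu).
    + intros x y U V HU HV HUx HVy [z [Hz1 Hz2]].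
      destruct (constructive_indefinite_description _ (Hexist x U)) as [W1 HW1]; simpl in Hz1.
      destruct (constructive_indefinite_description _ (Hexist y V)) as [W2 HW2]; simpl in Hz2.
      destruct (HW1 (conj HU HUx)) as [s1 [F1 [_ [Hs1 [HF1 [Hsub1 ->]]]]]].
      destruct (HW2 (conj HV HVy)) as [s2 [F2 [_ [Hs2 [HF2 [Hsub2 ->]]]]]].
      destruct (comparable le Ht s1 s2 z (proj1 Hz1) (proj1 Hz2)) as [H|H].
      * eapply mn_half; eauto.
      * destruct (mn_half le Ht y x z s2 s1 F2 F1 V U) as [A|A]; eauto.
Qed.

Lemma generic_reduce {T} (le : T -> T -> Prop) (good : T -> Prop) :
  is_tree le ->
  (forall x y, ~ le x y -> exists s, good s /\ le s x /\ ~ le s y) ->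
  (forall x, exists s, good s /\ le s x) ->
  forall x (l : list (T -> Prop)),
  Forall (fun A => exists t, good t /\ (A = V le t \/ A = compl (V le t))) l ->
  (forall A, In A l -> A x) ->
  exists s F, good s /\ le s x /\ Forall (isucc le x) F /\
    forall w, Wset le s F w -> forall A, In A l -> A w.
Proof.
  intros Ht Hbelow Hex x l. induction l as [|A l IH]; intros Hl Hx.
  - destruct (Hex x) as [s [Hg Hs]]. exists s, []. repeat split; auto.
    intros w _ A [].
  - inversion Hl as [|? ? HA Hl']; subst.
    destruct (IH Hl' (fun B HB => Hx B (or_intror HB))) as [s2 [F2 [Hg2 [Hs2 [HF2 HW2]]]]].
    assert (Hone : exists s F, good s /\ le s x /\ Forall (isucc le x) F /\
               forall w, Wset le s F w -> A w).
    { destruct HA as [t [Hgt [->| ->]]].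
      - exists t, []. assert (Hax := Hx _ (or_introl eq_refl)).
        repeat split; auto. intros w [Hw _]. exact Hw.
      - assert (Hax := Hx _ (or_introl eq_refl)). unfold compl, V in Hax.
        destruct (classic (le x t)) as [Hxt|Hxt].
        + assert (Hlt : lt le x t) by (split; [auto|intros ->; auto]).
          destruct (isucc_exists le Ht x t Hlt) as [u [Hu Hut]].
          destruct (Hex x) as [s [Hg Hs]].
          exists s, [u]. repeat split; auto.
          intros w [_ Hw] Htw. apply (Hw u); simpl; auto. eapply tree_trans; eauto.
        + destruct (Hbelow x t Hxt) as [s [Hg [Hs Hst]]].
          exists s, []. repeat split; auto.
          intros w [Hw _] Htw.
          destruct (comparable le Ht s t w Hw Htw) as [H|H]; [auto|].
          apply Hax. eapply tree_trans; eauto. }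
    destruct Hone as [s1 [F1 [Hg1 [Hs1 [HF1 HW1]]]]].
    destruct (comparable le Ht s1 s2 x Hs1 Hs2) as [H|H].
    + exists s2, (F1 ++ F2). repeat split; auto.
      * apply Forall_app; auto.
      * intros w [Hw HwF] B [<-|HB].
        -- apply HW1. split; [eapply tree_trans; eauto|].
           intros u Hu. apply HwF. apply in_or_app; auto.
        -- apply HW2; auto. split; auto. intros u Hu. apply HwF. apply in_or_app; auto.
    + exists s1, (F1 ++ F2). repeat split; auto.
      * apply Forall_app; auto.
      * intros w [Hw HwF] B [<-|HB].
        -- apply HW1. split; auto.
           intros u Hu. apply HwF. apply in_or_app; auto.
        -- apply HW2; auto. split; [eapply tree_trans; eauto|].
           intros u Hu. apply HwF. apply in_or_app; auto.
Qed.

Lemma open_W_generic {T} (le : T -> T -> Prop)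
  (S : (T -> Prop) -> Prop) s F :
  S (V le s) -> Forall (fun u => S (compl (V le u))) F ->
  open_from_subbase S (Wset le s F).
Proof.
  intros HsS HF w Hw.
  exists (V le s :: map (fun u => compl (V le u)) F). split; [|split].
  - constructor; auto. apply Forall_map. exact HF.
  - intros A [<-|HA]; [apply Hw|].
    apply in_map_iff in HA. destruct HA as [u [<- Hu]].
    intro H. apply (proj2 Hw u Hu). exact H.
  - intros y Hy. split; [apply (Hy _ (or_introl eq_refl))|].
    intros u Hu. apply (Hy (compl (V le u))). right. apply in_map_iff. eauto.
Qed.

Lemma coarse_mn {T} (le : T -> T -> Prop) : is_tree le ->
  nontrivial_pseudo_sups_are_sups le -> monotonically_normal (coarse_wedge_open le).
Proof.
  intros Ht Hs.
  assert (Hex : forall x, exists s, minimal_or_successor le s /\ le s x).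
  { intros x. destruct (root_below le Ht x) as [r [Hr Hrx]]. exists r. split; auto. left; auto. }
  apply (generic_mn le (minimal_or_successor le)); auto.
  - apply lemmaB; auto.
  - intros x s F Hg Hsx HF. apply open_W_generic.
    + exists s. split; auto.
    + rewrite Forall_forall in *. intros u Hu. exists u. split; auto.
      right. apply (isucc_succ le Ht x); auto.
  - intros x U HU HUx. destruct (HU x HUx) as [l [Hl [Hlx Hsub]]].
    destruct (generic_reduce le _ Ht (lemmaB le Ht Hs) Hex x l Hl Hlx)
      as [s [F [A [B [C D]]]]].
    exists s, F. repeat split; auto. intros w Hw. apply Hsub. apply D. exact Hw.
Qed.

Lemma fine_mn {T} (le : T -> T -> Prop) : is_tree le ->
  monotonically_normal (fine_wedge_open le).
Proof.
  intros Ht.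
  apply (generic_mn le (fun _ => True)); auto.
  - intros x y H. exists x. repeat split; auto. apply (tree_refl le Ht).
  - intros x. exists x. split; auto. apply (tree_refl le Ht).
  - intros x s F _ _ _. apply open_W_generic.
    + exists s. auto.
    + apply Forall_forall. intros u _. exists u. auto.
  - intros x U HU HUx. destruct (HU x HUx) as [l [Hl [Hlx Hsub]]].
    assert (Hl' : Forall (fun A => exists t, True /\ (A = V le t \/ A = compl (V le t))) l).
    { eapply Forall_impl; [|exact Hl]. intros A [t Ht']. exists t. auto. }
    destruct (generic_reduce le (fun _ => True) Ht
      (fun x y H => ex_intro _ x (conj I (conj (tree_refl le Ht x) H)))
      (fun x => ex_intro _ x (conj I (tree_refl le Ht x))) x l Hl' Hlx)
      as [s [F [A [B [C D]]]]].
    exists s, F. repeat split; auto. intros w Hw. apply Hsub. apply D. exact Hw.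
Qed.

Lemma chevron_mn {T} (le : T -> T -> Prop) : is_tree le ->
  nontrivial_pseudo_sups_are_sups le -> monotonically_normal (chevron_open le).
Proof.
  intros Ht Hs.
  assert (Hopen : forall s x, minimal_or_successor le s -> le s x ->
     chevron_open le (chevron_set le s x)).
  { intros s x Hm Hsx w Hw. exists (chevron_set le s x). split; [|split; auto].
    right. exists s, x. auto. }
  assert (Hred : forall x U, chevron_open le U -> U x ->
     exists s, minimal_or_successor le s /\ le s x /\
       forall w, chevron_set le s x w -> U w).
  { intros x U HU HUx. destruct (HU x HUx) as [A [HA [HAx HAU]]].
    destruct HA as [[m [Hm ->]] | [s [t [Hst [Hms ->]]]]].
    - subst x. exists m. split; [left; auto|split; [apply (tree_refl le Ht)|]].
      intros w [[H1 H2]| ->]; [contradiction|]. apply HAU. reflexivity.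
    - destruct HAx as [[Hsx Htx]| ->].
      + destruct (classic (le x t)) as [Hxt|Hxt].
        * exists s. repeat split; auto. intros w [[Hw1 Hw2]| ->]; [|apply HAU; left; auto].
          apply HAU. left. split; auto. intro Htw. apply Hw2.
          unfold V in *. eapply tree_trans; eauto.
        * destruct (lemmaB le Ht Hs x t Hxt) as [s' [Hm' [Hs'x Hs't]]].
          assert (Hss' : le s s').
          { destruct (comparable le Ht s s' x Hsx Hs'x) as [H|H]; auto.
            exfalso. apply Hs't. eapply tree_trans; eauto. }
          exists s'. repeat split; auto. intros w [[Hw1 Hw2]| ->]; [|apply HAU; left; auto].
          apply HAU. left. split; [unfold V in *; eapply tree_trans; eauto|].
          intro Htw. unfold V in *.
          destruct (comparable le Ht s' t w Hw1 Htw) as [H|H]; [auto|].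
          apply Htx. eapply tree_trans; eauto.
      + exists s. repeat split; auto. }
  split.
  - intros x y Hxy. destruct (classic (le x y)) as [Hle|Hle].
    + destruct (root_below le Ht x) as [r [Hr Hrx]].
      exists (chevron_set le r x). split; [apply Hopen; auto; left; auto|].
      split; [right; auto|]. intros [[_ H]|H]; auto.
    + destruct (lemmaB le Ht Hs x y Hle) as [s [Hm [Hsx Hsy]]].
      exists (chevron_set le s x). split; [apply Hopen; auto|].
      split; [right; auto|]. intros [[H _]|H]; auto.
  - assert (Hexist : forall x U, exists Wt : T -> Prop, (chevron_open le U /\ U x) ->
      exists s, minimal_or_successor le s /\ le s x /\
        (forall w, chevron_set le s x w -> U w) /\ Wt = chevron_set le s x).
    { intros x U. destruct (classic (chevron_open le U /\ U x)) as [[H1 H2]|Hn].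
      - destruct (Hred x U H1 H2) as [s [A [B C]]].
        exists (chevron_set le s x). intros _. exists s. tauto.
      - exists (fun _ => False). intros H; contradiction. }
    exists (fun x U => proj1_sig (constructive_indefinite_description _ (Hexist x U))).
    split.
    + intros x U HU HUx.
      destruct (constructive_indefinite_description _ (Hexist x U)) as [Wt HW]; simpl.
      destruct (HW (conj HU HUx)) as [s [Hm [Hsx [Hsub ->]]]].
      split; [apply Hopen; auto|]. split; [right; auto|exact Hsub].
    + intros x y U V0 HU HV HUx HVy [z [Hz1 Hz2]].
      destruct (constructive_indefinite_description _ (Hexist x U)) as [W1 HW1]; simpl in Hz1.
      destruct (constructive_indefinite_description _ (Hexist y V0)) as [W2 HW2]; simpl in Hz2.
      destruct (HW1 (conj HU HUx)) as [s1 [_ [Hs1 [Hsub1 ->]]]].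
      destruct (HW2 (conj HV HVy)) as [s2 [_ [Hs2 [Hsub2 ->]]]].
      destruct Hz1 as [[Hz1 Hz1']| ->]; [|left; apply Hsub2; exact Hz2].
      destruct Hz2 as [[Hz2 Hz2']| ->]; [|right; apply Hsub1; left; split; auto].
      unfold V in *.
      assert (half : forall x y s1 s2 (U V0 : T -> Prop), le s1 x -> le s2 y ->
          (forall w, chevron_set le s1 x w -> U w) ->
          (forall w, chevron_set le s2 y w -> V0 w) -> V0 y ->
          le s1 z -> ~ le x z -> le s2 z -> ~ le y z -> le s1 s2 -> V0 x \/ U y).
      { clear -Ht. intros x y s1 s2 U V0 Hs1 Hs2 Hsub1 Hsub2 HVy Hz1 Hz1' Hz2 Hz2' H12.
        destruct (classic (x = y)) as [->|Hne]; [left; auto|].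
        destruct (classic (le x y)) as [Hxy|Hxy].
        - destruct (comparable le Ht s2 x y Hs2 Hxy) as [H|H].
          + left. apply Hsub2. left. split; auto. intro Hyx. apply Hne.
            apply (tree_antisym le Ht); auto.
          + exfalso. apply Hz1'. eapply tree_trans; eauto.
        - right. apply Hsub1. left. split; auto. eapply tree_trans; eauto. }
      destruct (comparable le Ht s1 s2 z Hz1 Hz2) as [H|H].
      * eapply half; eauto.
      * destruct (half y x s2 s1 V0 U) as [A|A]; auto.
Qed.

Theorem theorem4p2 (T : Type) (le : T -> T -> Prop) :
  is_tree le ->
  pseudo_sups_singleton le ->
  nontrivial_pseudo_sups_are_sups le ->
  monotonically_normal (coarse_wedge_open le) /\
  monotonically_normal (fine_wedge_open le) /\
  monotonically_normal (chevron_open le).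
Proof.
  intros Ht _ Hs. split; [apply coarse_mn; auto|split; [apply fine_mn; auto|apply chevron_mn; auto]].
Qed.
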